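(* For every positive integer $n$, $$\sum_{k=1}^{n} \frac{2^k}{k} = \frac{2^n}{\mathrm{lcm}(1,2,\dots,n)} \cdot N_n,$$ where $N_n := \mathrm{lcm}\left\{\binom{n-1}{0}, \binom{n-1}{1}, \dots, \binom{n-1}{n-1}\right\} \cdot \sum_{k=0}^{n-1} \binom{n-1}{k}^{-1}$ is a positive integer. *)

(* Defs.v *)
From mathcomp Require Import all_boot all_order all_algebra.
Set Implicit Arguments. Unset Strict Implicit. Unset Printing Implicit Defensive.
Import Order.TTheory GRing.Theory Num.Theory.

Definition lcm_upto (n : nat) : nat := \big[lcmn/1%N]_(1 <= i < n.+1) i.

Definition lcm_binom (n : nat) : nat := \big[lcmn/1%N]_(k < n) 'C(n.-1, k).

Definition N_ (n : nat) : rat :=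
  ((lcm_binom n)%:R * \sum_(k < n) ('C(n.-1, k)%:R)^-1)%R.

(* Main.v *)
Require Import Defs.
From mathcomp Require Import all_boot all_order all_algebra.
From mathcomp Require Import zify ring lra.
Import GRing.Theory Num.Theory.


Lemma leib (N k : nat) : k <= N ->
  (N.+2 * 'C(N.+1, k.+1)) * (N.+2 * 'C(N.+1,k)) =
  (N.+1 * 'C(N,k)) * (N.+2 * 'C(N.+1,k) + N.+2 * 'C(N.+1,k.+1)).
Proof.
move=> hk.
have h1 := mul_bin_down N.+1 k. have h2 := mul_bin_left N.+1 k.
rewrite /= in h1.
set c := 'C(N.+1,k) in h1 h2 *. set x := 'C(N.+1,k.+1) in h2 *.
set z := 'C(N,k) in h1 *.
have hr : N.+2 = k.+1 + (N.+1 - k) by lia.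
set r := N.+1 - k in h1 h2 hr.
apply/eqP; rewrite -(eqn_pmul2l (ltn0Sn k)); apply/eqP.
have -> : k.+1 * (N.+2 * x * (N.+2 * c)) = (k.+1 * x) * (N.+2 * N.+2 * c) by nia.
have -> : k.+1 * (N.+1 * z * (N.+2 * c + N.+2 * x)) =
  (N.+1 * z) * (N.+2 * (k.+1 * c + k.+1 * x)) by nia.
rewrite h1 h2 {1 2}hr; nia.
Qed.

Lemma dvd_up a b c L : 0 < a -> 0 < b -> 0 < c -> c * b = a * (b + c) ->
  a %| L -> b %| L -> c %| L.
Proof.
move=> a0 b0 c0 e /dvdnP[u hu] /dvdnP[v hv].
have ab0 : 0 < a * b by rewrite muln_gt0 a0.
have hba : a <= b.
  have : a * c <= c * b by rewrite e mulnDr leq_addl.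
  by rewrite [c * b]mulnC leq_mul2r; case: c c0 {e}.
have huv : v <= u.
  have : a * v <= a * u by rewrite [a * u]mulnC -hu hv mulnC leq_mul2l hba orbT.
  by rewrite leq_mul2l; case: a a0 {hba hu e ab0}.
apply/dvdnP; exists (u - v); apply/eqP; rewrite -(eqn_pmul2r ab0); apply/eqP.
rewrite mulnBl mulnBl.
have -> : u * c * (a * b) = (u * a) * (c * b) by nia.
have -> : v * c * (a * b) = (v * b) * (c * a) by nia.
rewrite -hu -hv -mulnBr e.
have -> : a * (b + c) - c * a = a * b by lia.
by [].
Qed.

Lemma dvd_down a b c L : 0 < a -> 0 < b -> 0 < c -> c * b = a * (b + c) ->
  b %| L -> c %| L -> a %| L.
Proof.
move=> a0 b0 c0 e /dvdnP[u hu] /dvdnP[v hv].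
have bc0 : 0 < b * c by rewrite muln_gt0 b0.
apply/dvdnP; exists (u + v); apply/eqP; rewrite -(eqn_pmul2r bc0); apply/eqP.
have -> : (u + v) * a * (b * c) = a * (b * c * u + b * c * v) by nia.
have -> : b * c * u + b * c * v = (u * b) * c + b * (v * c) by nia.
rewrite -hu -hv.
have -> : a * (L * c + b * L) = L * (a * (b + c)) by nia.
by rewrite -e [c * b]mulnC.
Qed.


Definition f M k := M.+1 * 'C(M, k).

Lemma f_pos M k : k <= M -> 0 < f M k.
Proof. by move=> h; rewrite /f muln_gt0 bin_gt0 h. Qed.

Lemma lcm_upto_dvd j n : 0 < j <= n -> j %| lcm_upto n.
Proof.
case/andP=> j0 jn; rewrite /lcm_upto (@big_cat_nat _ _ _ j) //=; try lia.
rewrite (@big_ltn _ _ _ j); last by lia.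
by apply: dvdn_trans (dvdn_lcml _ _) (dvdn_lcmr _ _).
Qed.

Lemma lcm_upto_min n X : (forall j, 0 < j <= n -> j %| X) -> lcm_upto n %| X.
Proof.
move=> h; rewrite /lcm_upto big_nat.
apply: (big_ind (fun x => x %| X)) => //.
  by move=> x y hx hy; rewrite dvdn_lcm hx hy.
Qed.

Lemma up L n : (forall j, 0 < j <= n -> j %| L) ->
  forall M k, M < n -> k <= M -> f M k %| L.
Proof.
move=> hL; elim=> [|M IH] k Mn.
  by rewrite leqn0 => /eqP ->; rewrite /f bin0.
elim: k => [|k IHk] hk.
  by rewrite /f bin0 muln1; apply: hL; lia.
apply: (@dvd_up (f M k) (f M.+1 k) (f M.+1 k.+1)).
- by apply: f_pos.
- by apply: f_pos; lia.
- by apply: f_pos.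
- by rewrite /f leib.
- by apply: IH => //; lia.
- by apply: IHk; lia.
Qed.

Lemma down L M : (forall k, k <= M -> f M k %| L) ->
  forall d k, d <= M -> k <= M - d -> f (M - d) k %| L.
Proof.
move=> hL; elim=> [|d IH] k hd hk.
  by rewrite subn0; apply: hL; rewrite subn0 in hk.
have e : M - d = (M - d.+1).+1 by lia.
apply: (@dvd_down (f (M - d.+1) k) (f (M - d.+1).+1 k) (f (M - d.+1).+1 k.+1)).
- by apply: f_pos.
- by apply: f_pos; lia.
- by apply: f_pos; lia.
- by rewrite /f leib.
- by rewrite -e; apply: IH; lia.
- by rewrite -e; apply: IH; lia.
Qed.

Lemma lcm_eq M : lcm_upto M.+1 = M.+1 * lcm_binom M.+1.
Proof.
apply/eqP; rewrite eqn_dvd; apply/andP; split.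
  apply: lcm_upto_min => j hj.
  have := @down (M.+1 * lcm_binom M.+1) M _ (M - j.-1) 0.
  have -> : M - (M - j.-1) = j.-1 by lia.
  rewrite /f bin0 muln1 prednK; last by lia.
  apply=> //; [|lia].
  move=> k hk; rewrite /f dvdn_pmul2l //.
  by apply: (@biglcmn_sup _ (Ordinal (hk : k < M.+1))).
have hd : M.+1 %| lcm_upto M.+1 by apply: lcm_upto_dvd; rewrite leqnn.
rewrite (mulnC M.+1) -dvdn_divRL //.
apply/dvdn_biglcmP => k _; rewrite dvdn_divRL //=.
rewrite mulnC; apply: (@up _ M.+1).
- by move=> j hj; apply: lcm_upto_dvd.
- by [].
- by rewrite -ltnS ltn_ord.
Qed.

Local Open Scope ring_scope.
Local Open Scope ring_scope.

Ltac cl := repeat (apply/andP; split); apply: lt0r_neq0;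
  rewrite ?addr_gt0 ?mulr_gt0 //.

Lemma leib_rat (m k : nat) : (k <= m)%N ->
  ('C(m.+1,k)%:R)^-1 + ('C(m.+1,k.+1)%:R)^-1
   = (m.+2%:R / m.+1%:R) * ('C(m,k)%:R)^-1 :> rat.
Proof.
move=> hk.
have H := congr1 (GRing.natmul (1:rat)) (@leib m k hk).
have p1 : (0 < 'C(m.+1,k))%N by rewrite bin_gt0; lia.
have p2 : (0 < 'C(m.+1,k.+1))%N by rewrite bin_gt0; lia.
have p3 : (0 < 'C(m,k))%N by rewrite bin_gt0; lia.
move: H p1 p2 p3.
set C1 := 'C(m.+1,k); set C2 := 'C(m.+1,k.+1); set Z := 'C(m,k).
move=> H p1 p2 p3; clearbody C1 C2 Z.
rewrite !natrM natrD !natrM in H.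
rewrite -!(ltr0n rat) in p1 p2 p3.
have p4 : 0 < m.+1%:R :> rat by rewrite ltr0n.
have p5 : 0 < m.+2%:R :> rat by rewrite ltr0n.
move: H p1 p2 p3 p4 p5.
set c1 := C1%:R; set c2 := C2%:R; set z := Z%:R.
set m1 := m.+1%:R; set m2 := m.+2%:R => H p1 p2 p3 p4 p5; clearbody c1 c2 z m1 m2.
have hz : z = (m2*c2)*(m2*c1)/(m1*(m2*c1+m2*c2)).
  rewrite H; field; by cl.
rewrite hz; field; by cl.
Qed.

Local Open Scope ring_scope.

Definition T m := \sum_(k < m.+1) ('C(m,k)%:R)^-1 : rat.

Lemma T_rec m : 2 * T m.+1 - 2 = m.+2%:R / m.+1%:R * T m.
Proof.
have H : \sum_(k < m.+1) (('C(m.+1,k)%:R)^-1 + ('C(m.+1,k.+1)%:R)^-1)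
    = m.+2%:R / m.+1%:R * T m :> rat.
  by rewrite /T mulr_sumr; apply: eq_bigr => k _; apply: leib_rat; rewrite -ltnS ltn_ord.
rewrite -H big_split /=.
have e1 : T m.+1 = \sum_(k < m.+1) ('C(m.+1,k)%:R)^-1 + 1.
  by rewrite /T big_ord_recr /= binn invr1.
have e2 : T m.+1 = 1 + \sum_(k < m.+1) ('C(m.+1,k.+1)%:R)^-1.
  rewrite /T big_ord_recl bin0 invr1; congr (_ + _).
rewrite mulr2n mulrDl mul1r.
by rewrite {1}e1 e2; ring.
Qed.

Lemma H_eq m : \sum_(1 <= k < m.+2) ((2 ^+ k : rat) / k%:R)
   = 2 ^+ m.+1 / m.+1%:R * T m.
Proof.
elim: m => [|m IH].
  by rewrite big_nat1 /T big_ord1 bin0 invr1 mulr1.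
rewrite big_nat_recr //= IH.
have R := T_rec m.
have -> : T m.+1 = (m.+2%:R / m.+1%:R * T m + 2) / 2 by rewrite -R; field.
have p1 : 0 < m.+1%:R :> rat by rewrite ltr0n.
have p2 : 0 < m.+2%:R :> rat by rewrite ltr0n.
rewrite [2 ^+ m.+2]exprS; move: (2 ^+ m.+1) => P.
field.
have q : 0 <= m%:R :> rat by rewrite ler0n.
by apply/andP; split; apply: lt0r_neq0; lra.
Qed.

Local Open Scope ring_scope.

Lemma lcm_binom_gt0 n : (0 < lcm_binom n)%N.
Proof.
rewrite /lcm_binom; apply: (big_ind (fun x => 0 < x)%N) => //.
  by move=> x y hx hy; rewrite lcmn_gt0 hx hy.
move=> k _; rewrite bin_gt0; case: n k => [[]//|n] k /=; by rewrite -ltnS ltn_ord.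
Qed.

Theorem mainTheorem8 (n : nat) (hn : (0 < n)%N) :
  \sum_(1 <= k < n.+1) ((2 ^+ k : rat) / k%:R)
    = (2 ^+ n / (lcm_upto n)%:R) * N_ n
  /\ exists m : nat, (0 < m)%N /\ N_ n = m%:R.
Proof.
case: n hn => // m _.
have hl := lcm_binom_gt0 m.+1.
split.
  rewrite H_eq /N_ lcm_eq natrM /=.
  rewrite -/(T m).
  have q1 : 0 < (lcm_binom m.+1)%:R :> rat by rewrite ltr0n.
  have q2 : 0 < m.+1%:R :> rat by rewrite ltr0n.
  move: q1 q2 (T m) (2 ^+ m.+1 : rat) => q1 q2 t P.
  field.
  have q : 0 <= m%:R :> rat by rewrite ler0n.
  by apply/andP; split; apply: lt0r_neq0 => //; lra.
pose s : nat := (\sum_(k < m.+1) (lcm_binom m.+1 %/ 'C(m, k)))%N.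
exists s; split.
  rewrite /s big_ord_recl bin0 divn1; apply: (leq_trans hl); apply: leq_addr.
rewrite /s /N_ natr_sum mulr_sumr; apply: eq_bigr => k _ /=.
have hc : (0 < 'C(m, k))%N by rewrite bin_gt0 -ltnS ltn_ord.
rewrite natr_div.
- by rewrite mulrC.
- by apply: (@biglcmn_sup _ k).
- by rewrite unitfE pnatr_eq0 -lt0n.
Qed.
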